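(* For all $n,k\geq 1$, the space $\overline{\mathrm{SP}}^n(\bigvee^kS^1)$ is homeomorphic to the $n$-skeleton of the torus $(S^1)^k$, where $(S^1)^k$ carries the product CW structure in which each circle factor has one $0$-cell (the identity) and one $1$-cell.
   Context: Each circle of the wedge $\bigvee^kS^1$ is identified with the circle group $S^1$, the wedge point being the identity $1$ of each. $\mathrm{SP}^nY=Y^n/\Sigma_n$ is the $n$-th symmetric product, with points $\langle x_1,\ldots,x_n\rangle$. $\overline{\mathrm{SP}}^n(\bigvee^kS^1)$ is the quotient of $\mathrm{SP}^n(\bigvee^kS^1)$ by the equivalence relation generated by $\langle x,y,z_1,\ldots,z_{n-2}\rangle\sim\langle *,xy,z_1,\ldots,z_{n-2}\rangle$ whenever $x,y$ lie in the same circle, $xy$ being their product in that circle group and $*$ the wedge point. *)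

(* Defs.v *)
From HB Require Import structures.
From mathcomp Require Import all_boot all_order all_algebra all_fingroup.
From mathcomp Require Import generic_quotient.
From mathcomp Require Import all_classical all_reals.
From mathcomp Require Import all_analysis wedge_sigT.
From Stdlib Require Import Relation_Operators.
From mathcomp Require Import ring.

Set Implicit Arguments.
Unset Strict Implicit.
Unset Printing Implicit Defensive.
Import Order.TTheory GRing.Theory Num.Theory.
Import numFieldNormedType.Exports.
Local Open Scope classical_set_scope.
Local Open Scope ring_scope.
Local Open Scope quotient_scope.

Definition homeomorphic (X Y : topologicalType) : Prop :=
  exists (f : X -> Y) (g : Y -> X),
    continuous f /\ continuous g /\ cancel f g /\ cancel g f.

Section EqClos.
Variables (T : choiceType) (r : T -> T -> Prop).
Definition eqclos_b (x y : T) : bool := `[< clos_refl_sym_trans T r x y >].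
Lemma eqclos_refl : reflexive eqclos_b.
Proof. by move=> x; apply/asboolP; apply: rst_refl. Qed.
Lemma eqclos_sym : symmetric eqclos_b.
Proof.
by move=> x y; apply/asboolP/asboolP => ?; apply: rst_sym.
Qed.
Lemma eqclos_trans : transitive eqclos_b.
Proof.
move=> y x z /asboolP Hxy /asboolP Hyz; apply/asboolP.
exact: rst_trans Hxy Hyz.
Qed.
Definition eqclos : equiv_rel T :=
  @EquivRelPack T eqclos_b (EquivClass eqclos_refl eqclos_sym eqclos_trans).
End EqClos.

Definition quot_space (X : topologicalType) (r : X -> X -> Prop) : topologicalType :=
  quotient_topology {eq_quot (eqclos r)}.

Section Circle.
Variable R : realType.
Definition circle_set : set (R * R) := [set p | p.1 ^+ 2 + p.2 ^+ 2 = 1].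
Definition S1 : topologicalType := set_type circle_set.

Lemma circle_one : ((1 : R), (0 : R)) \in circle_set.
Proof. by apply/mem_set; rewrite /circle_set /= expr1n expr0n addr0. Qed.
Definition S1_one : S1 := exist _ (1, 0) circle_one.

(* complex multiplication of points of the unit circle *)
Definition cmul (p q : R * R) : R * R :=
  (p.1 * q.1 - p.2 * q.2, p.1 * q.2 + p.2 * q.1).
Lemma circle_mul (p q : R * R) :
  p \in circle_set -> q \in circle_set -> cmul p q \in circle_set.
Proof.
rewrite !inE /circle_set /= => hp hq.
have -> : (p.1 * q.1 - p.2 * q.2) ^+ 2 + (p.1 * q.2 + p.2 * q.1) ^+ 2
  = (p.1 ^+ 2 + p.2 ^+ 2) * (q.1 ^+ 2 + q.2 ^+ 2) by ring.
by rewrite hp hq mulr1.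
Qed.
Definition S1_mul (x y : S1) : S1 :=
  exist _ (cmul (sval x) (sval y)) (circle_mul (svalP x) (svalP y)).
End Circle.

(* each circle of the wedge is a copy of the circle group, glued at the
   identity 1; we use the library's wedge construction (quotient of the
   disjoint union {i : 'I_k & S1} identifying the basepoints). *)
Definition wedge_circles (R : realType) (k : nat) : topologicalType :=
  @wedge _ (fun _ : 'I_k => S1 R) (fun _ : 'I_k => (S1_one R : S1 R)).

Definition circ_incl (R : realType) (k : nat) (i : 'I_k) : S1 R -> wedge_circles R k :=
  @wedge_lift _ (fun _ : 'I_k => S1 R) (fun _ : 'I_k => (S1_one R : S1 R)) i.

Definition power_space (Y : topologicalType) (n : nat) : topologicalType :=
  {ptws 'I_n -> Y}.

Definition perm_rel (Y : topologicalType) (n : nat) (u v : power_space Y n) : Prop :=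
  exists s : 'S_n, v = u \o s.

Definition SP (Y : topologicalType) (n : nat) : topologicalType :=
  quot_space (@perm_rel Y n).

Definition SP_pt (Y : topologicalType) (n : nat) (u : power_space Y n) : SP Y n :=
  \pi_(SP Y n) u.

(* <x, y, z_1, ..., z_{n-2}> ~ <*, xy, z_1, ..., z_{n-2}> whenever x, y lie in
   the same circle (number c), xy being their product in that circle group and
   * the wedge point.  The two entries x, y may sit at any two distinct
   positions i0, i1 of a representing tuple u (points of SP^n are unordered). *)
Definition SPbar_rel (R : realType) (k n : nat) (P Q : SP (wedge_circles R k) n) : Prop :=
  exists (u : power_space (wedge_circles R k) n) (i0 i1 : 'I_n) (c : 'I_k) (x y : S1 R),
    [/\ i0 != i1, u i0 = circ_incl c x, u i1 = circ_incl c y,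
        P = SP_pt u &
        Q = SP_pt ((fun j => if j == i0 then circ_incl c (S1_one R)
                             else if j == i1 then circ_incl c (S1_mul x y)
                             else u j) : power_space (wedge_circles R k) n)].

Definition SPbar (R : realType) (k n : nat) : topologicalType :=
  quot_space (@SPbar_rel R k n).

Definition torus (R : realType) (k : nat) : topologicalType := power_space (S1 R) k.

(* Product CW structure: each circle factor has the 0-cell {1} and the 1-cell
   S^1 \ {1}.  The cells of (S^1)^k are indexed by J \subset 'I_k:
   e_J = { f | f i <> 1 exactly for i in J }, of dimension #|J|. *)
Definition torus_cell (R : realType) (k : nat) (J : {set 'I_k}) : set (torus R k) :=
  [set f | forall i, (f i != S1_one R) = (i \in J)].

Definition torus_skeleton_set (R : realType) (k n : nat) : set (torus R k) :=
  \bigcup_(J in [set J : {set 'I_k} | (#|J| <= n)%N]) @torus_cell R k J.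

Definition torus_skeleton (R : realType) (k n : nat) : topologicalType :=
  set_type (@torus_skeleton_set R k n).

(* Main.v *)
Require Import Defs.
From HB Require Import structures.
From mathcomp Require Import all_boot all_order all_algebra all_fingroup.
From mathcomp Require Import all_classical all_reals all_analysis.
From mathcomp Require Import generic_quotient wedge_sigT.
From Stdlib Require Import Relation_Operators.
From mathcomp Require Import ring lra.

Set Implicit Arguments.
Unset Strict Implicit.
Unset Printing Implicit Defensive.
Import Order.TTheory GRing.Theory Num.Theory.
Import numFieldNormedType.Exports.
Local Open Scope classical_set_scope.
Local Open Scope ring_scope.
Local Open Scope quotient_scope.

Section S1alg.
Variable R : realType.
Local Notation S1 := (S1 R).
Local Notation one := (S1_one R).
Local Notation mul := (@S1_mul R).

Lemma S1_eq (x y : S1) : sval x = sval y -> x = y.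
Proof. by move=> h; apply: eq_sig_hprop. Qed.

Lemma S1_mulA : associative mul.
Proof. by move=> x y z; apply: S1_eq => /=; rewrite /cmul /=; congr pair; ring. Qed.
Lemma S1_mulC : commutative mul.
Proof. by move=> x y; apply: S1_eq => /=; rewrite /cmul /=; congr pair; ring. Qed.
Lemma S1_mul1 : left_id one mul.
Proof. by move=> x; apply: S1_eq => /=; rewrite /cmul /=; case: (sval x) => a b /=; congr pair; ring. Qed.


End S1alg.
HB.instance Definition _ (R : realType) :=
  Monoid.isComLaw.Build (S1 R) (S1_one R) (@S1_mul R) (@S1_mulA R) (@S1_mulC R) (@S1_mul1 R).

Section S1top.
Variable R : realType.
Local Notation S1 := (S1 R).

Lemma cont_fst (X Y : topologicalType) : continuous (@fst X Y).
Proof. by move=> p; exact: cvg_fst. Qed.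
Lemma cont_snd (X Y : topologicalType) : continuous (@snd X Y).
Proof. by move=> p; exact: cvg_snd. Qed.

Lemma sq_cont : continuous (fun p : R * R => p.1 ^+ 2 + p.2 ^+ 2).
Proof.
have h1 : continuous (fun p : R * R => p.1 ^+ 2).
  by move=> p; exact: (@continuous_comp _ _ _ fst (fun x : R => x ^+ 2) p (@cont_fst R R p) (@exprn_continuous R 2 _)).
have h2 : continuous (fun p : R * R => p.2 ^+ 2).
  by move=> p; exact: (@continuous_comp _ _ _ snd (fun x : R => x ^+ 2) p (@cont_snd R R p) (@exprn_continuous R 2 _)).
by move=> p; apply: cvgD; [exact: h1|exact: h2].
Qed.

Lemma circle_closed : closed (@circle_set R).
Proof.
have -> : @circle_set R = (fun p : R * R => p.1 ^+ 2 + p.2 ^+ 2) @^-1` [set x | x = 1].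
  by [].
apply: preimage_closed; first by move=> x _; exact: sq_cont.
exact: closed_eq.
Qed.

Lemma S1_val_cont : continuous (fun x : S1 => sval x).
Proof. exact: initial_continuous. Qed.

Lemma S1_cont_into (X : topologicalType) (f : X -> S1) :
  continuous (fun x => sval (f x)) -> continuous f.
Proof. move=> h; exact: (@continuous_comp_initial _ X _ _ f h). Qed.

End S1top.

Lemma hausdorff_family (X : topologicalType) (I : Type) (Y : I -> topologicalType)
  (g : forall i, X -> Y i) : (forall i, hausdorff_space (Y i)) ->
  (forall i, continuous (g i)) -> (forall x y, (forall i, g i x = g i y) -> x = y) ->
  hausdorff_space X.
Proof.
move=> hY cg inj p q cl; apply: inj => i; apply: hY => A B nA nB.
have := cl _ _ (cg i p _ nA) (cg i q _ nB).
by case=> z [Az Bz]; exists (g i z).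
Qed.

Lemma cont_comp (X Y Z : topologicalType) (f : X -> Y) (g : Y -> Z) :
  continuous f -> continuous g -> continuous (fun x => g (f x)).
Proof. by move=> hf hg x; exact: (continuous_comp (hf x) (hg (f x))). Qed.

Lemma cont_pair (X A B : topologicalType) (f : X -> A) (g : X -> B) :
  continuous f -> continuous g -> continuous (fun x => (f x, g x)).
Proof. by move=> hf hg x; exact: (cvg_pair (hf x) (hg x)). Qed.

Section S1top2.
Variable R : realType.
Local Notation S1 := (S1 R).

Lemma S1_hausdorff : hausdorff_space S1.
Proof.
apply: (@hausdorff_family S1 bool (fun _ => R)
   (fun b (x : S1) => if b then (sval x).1 else (sval x).2)).
- by move=> _; exact: Rhausdorff.
- case => x.
  + exact: (@continuous_comp _ _ _ (fun x : S1 => sval x) fst x (@S1_val_cont R x) (@cont_fst R R _)).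
  + exact: (@continuous_comp _ _ _ (fun x : S1 => sval x) snd x (@S1_val_cont R x) (@cont_snd R R _)).
- move=> x y h; apply: S1_eq; have := h true; have := h false => /=.
  by case: (sval x) => a b; case: (sval y) => c d /= -> ->.
Qed.

Lemma circle_compact : compact (@circle_set R).
Proof.
have hc := compact_setX (@segment_compact R (-1) 1) (@segment_compact R (-1) 1).
apply: (subclosed_compact _ hc).
- exact: circle_closed.
- move=> [a b]; rewrite /circle_set /= => h.
  by split; rewrite /= in_itv /=; apply/andP; split; nra.
Qed.

Lemma S1_compact : compact [set: S1].
Proof.
pose f (p : R * R) : S1 := insubd (S1_one R) p.
have fc : {within @circle_set R, continuous f}.
  apply/subspace_sigL_continuousP.
  have -> : sigL (@circle_set R) f = id.
    apply: funext => x; apply: S1_eq; rewrite /sigL /f /=.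
    case: x => p hp /=; rewrite insubdK //.
  by move=> x.
have := continuous_compact fc circle_compact.
congr compact; apply/seteqP; split => // x _.
exists (sval x); first by case: x => /= ? /set_mem.
by apply: S1_eq; rewrite /f insubdK //; case: x.
Qed.

Lemma cR_M (X : topologicalType) (f g : X -> R) : continuous f -> continuous g ->
  continuous (fun x => f x * g x).
Proof. by move=> hf hg x; apply: cvgM; [exact: hf|exact: hg]. Qed.
Lemma cR_D (X : topologicalType) (f g : X -> R) : continuous f -> continuous g ->
  continuous (fun x => f x + g x).
Proof. by move=> hf hg x; apply: cvgD; [exact: hf|exact: hg]. Qed.
Lemma cR_B (X : topologicalType) (f g : X -> R) : continuous f -> continuous g ->
  continuous (fun x => f x - g x).
Proof. by move=> hf hg x; apply: cvgB; [exact: hf|exact: hg]. Qed.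

Lemma S1_mul_cont : continuous (fun p : S1 * S1 => S1_mul p.1 p.2).
Proof.
apply: S1_cont_into => /=.
have c11 : continuous (fun p : S1 * S1 => (sval p.1).1).
  exact: (cont_comp (cont_comp (@cont_fst S1 S1) (@S1_val_cont R)) (@cont_fst R R)).
have c12 : continuous (fun p : S1 * S1 => (sval p.1).2).
  exact: (cont_comp (cont_comp (@cont_fst S1 S1) (@S1_val_cont R)) (@cont_snd R R)).
have c21 : continuous (fun p : S1 * S1 => (sval p.2).1).
  exact: (cont_comp (cont_comp (@cont_snd S1 S1) (@S1_val_cont R)) (@cont_fst R R)).
have c22 : continuous (fun p : S1 * S1 => (sval p.2).2).
  exact: (cont_comp (cont_comp (@cont_snd S1 S1) (@S1_val_cont R)) (@cont_snd R R)).
exact: (cont_pair (cR_B (cR_M c11 c21) (cR_M c12 c22)) (cR_D (cR_M c11 c22) (cR_M c12 c21))).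
Qed.

End S1top2.

Lemma prod_cont_into (X : topologicalType) (I : Type) (K : I -> topologicalType)
  (f : X -> prod_topology K) : (forall i, continuous (fun x => f x i)) -> continuous f.
Proof.
move=> h x; apply/cvg_sup => i.
exact: (@continuous_comp_initial _ X _ (fun g : (forall i, K i) => g i) f (h i) x).
Qed.

Section Wedge.
Variables (R : realType) (k : nat).
Local Notation W := (wedge_circles R k).
Local Notation S1 := (S1 R).
Local Notation one := (S1_one R).
Local Notation WQ := (@wedge 'I_k (fun _ => S1) (fun _ => one)).

Definition wrep (w : W) : {i : 'I_k & S1} := repr (w : WQ).
Definition wc (w : W) : 'I_k := projT1 (wrep w).
Definition wx (w : W) : S1 := projT2 (wrep w).

Lemma wdecomp (w : W) : circ_incl (wc w) (wx w) = w.
Proof. by rewrite /circ_incl /wedge_lift /wc /wx /wrep /= surjective_existT reprK. Qed.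

Lemma incl_spec c x : (wc (circ_incl c x) = c /\ wx (circ_incl c x) = x) \/
   (x = one /\ wx (circ_incl c x) = one).
Proof.
rewrite /wc /wx /wrep.
have : \pi_WQ (repr (circ_incl c x : WQ)) = circ_incl c x by rewrite reprK.
rewrite {2}/circ_incl /wedge_lift /=.
case: (repr (circ_incl c x : WQ)) => i y.
move/eqmodP/predU1P => [h | /andP [/eqP h1 /eqP h2]].
- left; have E := existT_inj1 h; subst i; by rewrite (existT_inj2 h).
- by right.
Qed.

Definition prj (c : 'I_k) (w : W) : S1 := if wc w == c then wx w else one.

Lemma prj_incl c' c x : prj c' (circ_incl c x) = if c == c' then x else one.
Proof.
rewrite /prj; case: (incl_spec c x) => [[-> ->] | [-> ->]] //.
by case: ifP; case: ifP.
Qed.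

Lemma prj_cont c : continuous (prj c).
Proof.
have -> : prj c = wedge_fun (fun i (x : S1) => if i == c then x else one) by [].
apply: wedge_fun_continuous.
- move=> i; case: (i == c) => x; [by move=> U | exact: cst_continuous].
- by move=> i j; case: ifP; case: ifP.
Qed.

Lemma wedge_circles_compact : compact [set: W].
Proof. apply: wedge_compact; [exact: finite_finset | move=> _; exact: S1_compact]. Qed.

End Wedge.

Section Phi.
Variables (R : realType) (k n : nat).
Local Notation W := (wedge_circles R k).
Local Notation S1 := (S1 R).
Local Notation one := (S1_one R).
Local Notation mul := (@S1_mul R).
Local Notation Y := (power_space W n).

Definition Phi0 (u : Y) : torus R k := fun c => \big[mul/one]_(j < n) prj c (u j).

Lemma Phi0_cont : continuous Phi0.
Proof.
apply: prod_cont_into => c.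
suff H : forall s : seq 'I_n, continuous (fun u : Y => \big[mul/one]_(j <- s) prj c (u j)).
  exact: H.
elim => [|j s IH].
  have -> : (fun u : Y => \big[mul/one]_(j <- [::]) prj c (u j)) = fun _ => one.
    by apply: funext => u; rewrite big_nil.
  exact: cst_continuous.
have -> : (fun u : Y => \big[mul/one]_(i <- j :: s) prj c (u i)) =
   (fun p : S1 * S1 => mul p.1 p.2) \o (fun u : Y => (prj c (u j), \big[mul/one]_(i <- s) prj c (u i))).
  by apply: funext => u; rewrite big_cons.
apply: (cont_comp _ (@S1_mul_cont R)).
apply: cont_pair => //.
apply: (cont_comp _ (@prj_cont R k c)).
exact: (@proj_continuous _ (fun _ : 'I_n => W) j).
Qed.

Lemma Phi0_perm (u : Y) (s : 'S_n) : Phi0 ((u \o s) : Y) = Phi0 u.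
Proof.
apply: funext => c; rewrite /Phi0 [RHS](reindex_inj (@perm_inj _ s)) /=.
by [].
Qed.

Lemma Phi0_move (u : Y) (i0 i1 : 'I_n) (c : 'I_k) (x y : S1) :
  i0 != i1 -> u i0 = circ_incl c x -> u i1 = circ_incl c y ->
  Phi0 ((fun j => if j == i0 then circ_incl c one
                  else if j == i1 then circ_incl c (mul x y) else u j) : Y) = Phi0 u.
Proof.
move=> ne h0 h1; apply: funext => c'; rewrite /Phi0.
rewrite (bigD1 i0) //= [RHS](bigD1 i0) //=.
rewrite (bigD1 i1) 1?eq_sym //= [in RHS](bigD1 i1) 1?eq_sym //=.
have ne' : i1 != i0 by rewrite eq_sym.
rewrite eqxx (negbTE ne) eqxx h0 h1 !prj_incl.
have -> : \big[mul/one]_(i < n | (i != i0) && (i != i1))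
           prj c' (if i == i0 then circ_incl c one
              else if i == i1 then circ_incl c (mul x y) else u i) =
          \big[mul/one]_(i < n | (i != i0) && (i != i1)) prj c' (u i).
  by apply: eq_bigr => j /andP [/negbTE -> /negbTE ->].
case: (c == c'); last by [].
by rewrite S1_mul1 S1_mulA.
Qed.

Local Notation SPQ := {eq_quot (eqclos (@perm_rel W n))}.
Local Notation SPbQ := {eq_quot (eqclos (@SPbar_rel R k n))}.

Definition Phi1 (P : SP W n) : torus R k := Phi0 (repr (P : SPQ)).

Lemma crst_Phi0 a b : clos_refl_sym_trans _ (@perm_rel W n) a b -> Phi0 a = Phi0 b.
Proof.
elim => [x y [s ->]| x | x y _ -> | x y z _ -> _ ->] //.
by rewrite Phi0_perm.
Qed.

Lemma SP_eq_Phi0 a b : SP_pt a = SP_pt b -> Phi0 a = Phi0 b.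
Proof. by rewrite /SP_pt => /eqmodP /asboolP; exact: crst_Phi0. Qed.

Lemma Phi1_pt u : Phi1 (SP_pt u) = Phi0 u.
Proof. by apply: SP_eq_Phi0; rewrite /SP_pt reprK. Qed.

Lemma Phi1_cont : continuous Phi1.
Proof.
apply: (@repr_comp_continuous Y SPQ (torus R k) Phi0 Phi0_cont).
by move=> a b /eqP h; apply/eqP; exact: SP_eq_Phi0.
Qed.

Definition Phi2 (Q : SPbar R k n) : torus R k := Phi1 (repr (Q : SPbQ)).

Lemma SPbar_rel_Phi1 P Q : SPbar_rel P Q -> Phi1 P = Phi1 Q.
Proof.
case=> u [i0 [i1 [c [x [y [ne h0 h1 -> ->]]]]]].
by rewrite !Phi1_pt Phi0_move.
Qed.

Lemma crst_Phi1 a b : clos_refl_sym_trans _ (@SPbar_rel R k n) a b -> Phi1 a = Phi1 b.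
Proof.
elim => [x y h| x | x y _ -> | x y z _ -> _ ->] //.
exact: SPbar_rel_Phi1.
Qed.

Lemma SPbar_eq_Phi1 (a b : SP W n) : \pi_SPbQ a = \pi_SPbQ b -> Phi1 a = Phi1 b.
Proof. by move=> /eqmodP /asboolP; exact: crst_Phi1. Qed.

Lemma Phi2_pt P : Phi2 (\pi_SPbQ P) = Phi1 P.
Proof. by apply: SPbar_eq_Phi1; rewrite reprK. Qed.

Lemma Phi2_cont : continuous Phi2.
Proof.
apply: (@repr_comp_continuous (SP W n) SPbQ (torus R k) Phi1 Phi1_cont).
by move=> a b /eqP h; apply/eqP; exact: SPbar_eq_Phi1.
Qed.

End Phi.

Section Core.
Variables (R : realType) (k n : nat).
Local Notation W := (wedge_circles R k).
Local Notation S1 := (S1 R).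
Local Notation one := (S1_one R).
Local Notation mul := (@S1_mul R).
Local Notation Y := (power_space W n).
Local Notation SPQ := {eq_quot (eqclos (@perm_rel W n))}.
Local Notation SPbQ := {eq_quot (eqclos (@SPbar_rel R k n))}.
Local Notation Phi0 := (@Phi0 R k n).

Definition nonb (w : W) : bool := wx w != one.

Lemma prj_ne1 c (w : W) : prj c w != one -> w = circ_incl c (prj c w).
Proof. rewrite /prj; case: (eqVneq (wc w) c) => [<- _|_]; [by rewrite wdecomp | by rewrite eqxx]. Qed.
Lemma prj_ne1_wc c (w : W) : prj c w != one -> wc w = c.
Proof. by rewrite /prj; case: (eqVneq (wc w) c) => // _; rewrite eqxx. Qed.
Lemma prj_wc (w : W) : prj (wc w) w = wx w.
Proof. by rewrite /prj eqxx. Qed.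
Lemma wx_incl1 c : wx (circ_incl c one : W) = one.
Proof. by case: (incl_spec c one) => [[_ ->]|[_ ->]]. Qed.
Lemma base_eq c0 (w : W) : wx w = one -> w = circ_incl c0 one.
Proof.
move=> h; rewrite -(wdecomp w) h /circ_incl.
exact: (@wedge_liftE _ _ _ c0 one (wc w) one).
Qed.

Definition terminal (u : Y) := forall i j c, i != j -> prj c (u i) != one -> prj c (u j) = one.

Lemma Phi0_one (u : Y) c : (forall j, prj c (u j) = one) -> Phi0 u c = one.
Proof. by move=> h; rewrite /Phi0 big1. Qed.

Lemma Phi0_ex (u : Y) c : Phi0 u c != one -> exists j, prj c (u j) != one.
Proof.
move=> h; apply: contrapT => none; move/negP: h; apply.
apply/eqP; apply: Phi0_one => j.
case: (eqVneq (prj c (u j)) one) => // hj; exfalso; apply: none; by exists j.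
Qed.

Lemma Phi0_single (u : Y) j c : terminal u -> prj c (u j) != one -> Phi0 u c = prj c (u j).
Proof.
move=> T h; rewrite /Phi0 (bigD1 j) //= big1 => [|i ne]; first by rewrite S1_mulC S1_mul1.
by apply: (T j i c) => //; rewrite eq_sym.
Qed.

Lemma Phi0_skel (u : Y) : @torus_skeleton_set R k n (Phi0 u).
Proof.
exists [set c | Phi0 u c != one]%SET; last by move=> c; rewrite inE.
rewrite /=.
apply: (@leq_trans #|[set wc (u j) | j in 'I_n]%SET|).
  apply: subset_leq_card; apply/fintype.subsetP => c; rewrite inE => /Phi0_ex [j hj].
  by apply/imsetP; exists j => //; rewrite (prj_ne1_wc hj).
by apply: (leq_trans (leq_imset_card _ _)); rewrite card_ord.
Qed.

Definition Erel (u v : Y) := \pi_SPbQ (SP_pt u) = \pi_SPbQ (SP_pt v).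
Definition nbc (u : Y) := #|[set j | nonb (u j)]%SET|.

Lemma prj_nonb c (w : W) : prj c w != one -> nonb w.
Proof. by move=> h; move: (h); rewrite /prj (prj_ne1_wc h) eqxx. Qed.

Lemma step (u : Y) i j c : i != j -> prj c (u i) != one -> prj c (u j) != one ->
  exists u', Erel u u' /\ Phi0 u' = Phi0 u /\ (nbc u' < nbc u)%N.
Proof.
move=> ne hi hj.
set x := prj c (u i); set y := prj c (u j).
have ei : u i = circ_incl c x := prj_ne1 hi.
have ej : u j = circ_incl c y := prj_ne1 hj.
pose u' : Y := (fun l => if l == i then circ_incl c one
                       else if l == j then circ_incl c (mul x y) else u l).
exists u'; split; [|split].
- rewrite /Erel; apply/eqmodP; apply/asboolP; apply: rst_step.
  by exists u, i, j, c, x, y; split.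
- exact: Phi0_move.
- rewrite /nbc (cardsD1 i [set l | nonb (u l)]%SET) inE (prj_nonb hi) add1n ltnS.
  apply: subset_leq_card; apply/fintype.subsetP => l; rewrite !inE /u'.
  case: eqVneq => [->|nli] /=; first by rewrite /nonb wx_incl1 eqxx.
  by case: eqVneq => [-> _|_ //]; exact: (prj_nonb hj).
Qed.

Lemma reduce m (u : Y) : (nbc u <= m)%N -> exists v, Erel u v /\ Phi0 v = Phi0 u /\ terminal v.
Proof.
elim: m u => [|m IH] u hm;
  have [[i [j [c [ne [hi hj]]]]]|nex] := pselect (exists i j c,
     i != j /\ prj c (u i) != one /\ prj c (u j) != one).
- have [u' [_ [_ lt]]] := step ne hi hj.
  by move: hm; rewrite leqn0 => /eqP h; rewrite h in lt.
- exists u; split => //; split => // i j c ne hi; apply/eqP; apply/negPn/negP => hj.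
  by apply: nex; exists i, j, c.
- have [u' [E1 [P1 lt]]] := step ne hi hj.
  have [v [E2 [P2 T]]] := IH u' (leq_trans lt hm).
  by exists v; split; [rewrite /Erel E1 | split; [rewrite P2 P1|]].
- exists u; split => //; split => // i j c ne hi; apply/eqP; apply/negPn/negP => hj.
  by apply: nex; exists i, j, c.
Qed.

Lemma term_mem (u : Y) (w : W) : terminal u -> nonb w ->
  (w \in [seq u j | j <- enum 'I_n]) = (Phi0 u (wc w) == wx w).
Proof.
move=> T nw; apply/idP/idP.
- case/mapP => j _ E; subst w.
  have h1 : prj (wc (u j)) (u j) != one by rewrite prj_wc.
  by rewrite (Phi0_single T h1) prj_wc.
- move/eqP=> h; have : Phi0 u (wc w) != one by rewrite h.
  case/Phi0_ex => j hj; apply/mapP; exists j; first by rewrite mem_enum.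
  by rewrite (prj_ne1 hj) -(Phi0_single T hj) h wdecomp.
Qed.

Lemma term_uniq (u : Y) : terminal u -> uniq [seq w <- [seq u j | j <- enum 'I_n] | nonb w].
Proof.
move=> T; rewrite filter_map map_inj_in_uniq; first by apply: filter_uniq; exact: enum_uniq.
move=> i j; rewrite !mem_filter => /andP [hi _] /andP [hj _] e.
case: (eqVneq i j) => // ne; exfalso.
have := T i j (wc (u i)) ne; rewrite -e prj_wc => /(_ hi) /eqP.
by rewrite (negbTE hi).
Qed.
End Core.

Section Core2.
Variables (R : realType) (k n : nat) (c0 : 'I_k).
Local Notation W := (wedge_circles R k).
Local Notation S1 := (S1 R).
Local Notation one := (S1_one R).
Local Notation mul := (@S1_mul R).
Local Notation Y := (power_space W n).
Local Notation SPQ := {eq_quot (eqclos (@perm_rel W n))}.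
Local Notation SPbQ := {eq_quot (eqclos (@SPbar_rel R k n))}.
Local Notation Phi0 := (@Phi0 R k n).
Local Notation nb := (@nonb R k).

Lemma term_perm (u v : Y) : terminal u -> terminal v -> Phi0 u = Phi0 v ->
  perm_eq [seq u j | j <- enum 'I_n] [seq v j | j <- enum 'I_n].
Proof.
move=> Tu Tv Puv.
set su := [seq u j | j <- enum 'I_n]; set sv := [seq v j | j <- enum 'I_n].
have Pn : perm_eq [seq w <- su | nonb w] [seq w <- sv | nonb w].
  apply: uniq_perm; [exact: term_uniq | exact: term_uniq|] => w.
  rewrite !mem_filter; case nw: (nonb w) => //=.
  by rewrite !term_mem // Puv.
have Hsz : size su = size sv by rewrite !size_map.
have cnt : count (predC nb) su = count (predC nb) sv.
  have := count_predC nb su; have := count_predC nb sv.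
  rewrite -!size_filter (perm_size Pn) -Hsz => <- /eqP.
  by rewrite eqn_add2l => /eqP.
have allb : forall s : seq W, all (pred1 (circ_incl c0 one)) [seq w <- s | predC nb w].
  move=> s; apply/allP => w; rewrite mem_filter /= => /andP [nw _].
  by apply/eqP; apply: base_eq; move: nw; rewrite /nonb negbK => /eqP.
have Pb : [seq w <- su | predC nb w] = [seq w <- sv | predC nb w].
  rewrite (all_pred1P _ _ (allb su)) (all_pred1P _ _ (allb sv)).
  by rewrite !size_filter cnt.
apply: (@perm_trans _ ([seq w <- su | nonb w] ++ [seq w <- su | predC nb w])).
  by rewrite perm_sym perm_filterC.
apply: (@perm_trans _ ([seq w <- sv | nonb w] ++ [seq w <- sv | predC nb w])).
  by rewrite Pb perm_cat2r.
by rewrite perm_filterC.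
Qed.

Lemma perm_exists (u v : Y) :
  perm_eq [seq u j | j <- enum 'I_n] [seq v j | j <- enum 'I_n] ->
  exists s : 'S_n, v = ((u \o s) : Y).
Proof.
have mE : forall f : 'I_n -> W, [seq f j | j <- enum 'I_n] = [tuple f j | j < n].
  by move=> f; rewrite -[RHS]map_tnth_enum; apply: eq_map => j; rewrite tnth_mktuple.
rewrite !mE perm_sym => /tuple_permP [p hp].
exists p; apply: funext => j /=.
have := congr1 (fun s => nth (v j) s j) hp.
by rewrite !nth_mktuple tnth_mktuple.
Qed.

Lemma inj_Phi0 (u v : Y) : Phi0 u = Phi0 v -> Erel u v.
Proof.
move=> P.
have [u' [Eu [Pu Tu]]] := reduce (leqnn (nbc u)).
have [v' [Ev [Pv Tv]]] := reduce (leqnn (nbc v)).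
have Puv : Phi0 u' = Phi0 v' by rewrite Pu Pv P.
have [s hs] := perm_exists (term_perm Tu Tv Puv).
have : SP_pt u' = SP_pt v'.
  rewrite hs /SP_pt; apply/eqmodP; apply/asboolP; apply: rst_step; by exists s.
by rewrite /Erel Eu Ev => ->.
Qed.

End Core2.

Lemma S1_mulr1 (R : realType) : right_id (S1_one R) (@S1_mul R).
Proof. by move=> x; rewrite S1_mulC S1_mul1. Qed.

Section Can.
Variables (R : realType) (k n : nat) (c0 : 'I_k).
Local Notation W := (wedge_circles R k).
Local Notation S1 := (S1 R).
Local Notation one := (S1_one R).
Local Notation mul := (@S1_mul R).
Local Notation Y := (power_space W n).
Local Notation Phi0 := (@Phi0 R k n).

Definition can (f : torus R k) : Y := fun j =>
  nth (circ_incl c0 one) [seq circ_incl c (f c) | c <- enum [set c | f c != one]%SET] j.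

Lemma big_pad (F : W -> S1) (ws : seq W) b : F b = one -> (size ws <= n)%N ->
  \big[mul/one]_(j < n) F (nth b ws j) = \big[mul/one]_(w <- ws) F w.
Proof.
move=> Fb hs; rewrite (big_nth b) -(big_mkord xpredT (fun j => F (nth b ws j))).
rewrite (@big_cat_nat _ _ _ (size ws)) //= [X in mul _ X]big1_seq ?S1_mulr1 //.
move=> i /andP [_]; rewrite mem_index_iota => /andP [hi _].
by rewrite nth_default.
Qed.

Lemma Phi0_can f : @torus_skeleton_set R k n f -> Phi0 (can f) = f.
Proof.
case=> J hJ hcell.
have hJ' : (#|J| <= n)%N := hJ.
have eJ : [set c | f c != one]%SET = J by apply/setP => c; rewrite inE hcell.
apply: funext => c; rewrite /Phi0 /can.
rewrite (@big_pad (prj c)); first last.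
- by rewrite size_map -cardE eJ.
- by rewrite prj_incl; case: ifP.
rewrite big_map big_enum /=.
under eq_bigr => c' _ do rewrite prj_incl.
rewrite big_mkcond (bigD1 c) //= big1 => [| c' ne].
  rewrite S1_mulr1 inE eqxx.
  by case: (eqVneq (f c) one).
by rewrite (negbTE ne); case: ifP.
Qed.

End Can.

Lemma settype_cont_into (X Z : topologicalType) (A : set Z) (f : X -> set_type A) :
  continuous (fun x => sval (f x)) -> continuous f.
Proof. move=> h; exact: (@continuous_comp_initial _ X _ _ f h). Qed.

Section Final.
Variables (R : realType) (k n : nat) (c0 : 'I_k).
Local Notation W := (wedge_circles R k).
Local Notation S1 := (S1 R).
Local Notation one := (S1_one R).
Local Notation Y := (power_space W n).
Local Notation SPQ := {eq_quot (eqclos (@perm_rel W n))}.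
Local Notation SPbQ := {eq_quot (eqclos (@SPbar_rel R k n))}.
Local Notation Sk := (torus_skeleton R k n).

Lemma Y_compact : compact [set: Y].
Proof.
have := @tychonoff 'I_n (fun _ => W) (fun _ => [set: W]) (fun _ => @wedge_circles_compact R k).
by congr compact; apply/seteqP; split.
Qed.

Definition piu (u : Y) : SPbar R k n := \pi_SPbQ (SP_pt u).

Lemma piu_cont : continuous piu.
Proof.
apply: (cont_comp (@pi_continuous _ SPQ)).
exact: (@pi_continuous _ SPbQ).
Qed.

Lemma piu_surj (Q : SPbar R k n) : Q = piu (repr (repr (Q : SPbQ) : SPQ)).
Proof. by rewrite /piu /SP_pt !reprK. Qed.

Lemma SPbar_compact : compact [set: SPbar R k n].
Proof.
have := continuous_compact (continuous_subspaceT piu_cont) Y_compact.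
congr compact; apply/seteqP; split => // Q _.
by exists (repr (repr (Q : SPbQ) : SPQ)) => //; rewrite -piu_surj.
Qed.

Lemma Sk_hausdorff : hausdorff_space Sk.
Proof.
apply: (@hausdorff_family Sk ('I_k * bool)%type (fun _ => R)
   (fun p (y : Sk) => if p.2 then (sval (sval y p.1)).1 else (sval (sval y p.1)).2)).
- by move=> _; exact: Rhausdorff.
- case => c b /=.
  have h1 : continuous (fun y : Sk => sval y) := @initial_continuous _ _ _.
  have h2 : continuous (fun y : Sk => sval y c).
    exact: (cont_comp h1 (@proj_continuous _ (fun _ : 'I_k => S1) c)).
  have h3 : continuous (fun y : Sk => sval (sval y c)) := cont_comp h2 (@S1_val_cont R).
  case: b.
  + exact: (cont_comp h3 (@cont_fst R R)).
  + exact: (cont_comp h3 (@cont_snd R R)).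
- move=> x y h; apply: eq_sig_hprop => [? ? ?|]; first exact: Prop_irrelevance.
  apply: functional_extensionality_dep => c; apply: S1_eq.
  have := h (c, true); have := h (c, false) => /=.
  by case: (sval (sval x c)) => a b; case: (sval (sval y c)) => a' b' /= -> ->.
Qed.

End Final.

Theorem mainTheorem2 (R : realType) (n k : nat) :
  (1 <= n)%N -> (1 <= k)%N -> homeomorphic (SPbar R k n) (torus_skeleton R k n).
Proof.
move=> _ hk.
pose c0 : 'I_k := Ordinal hk.
have skel : forall Q : SPbar R k n, Phi2 Q \in @torus_skeleton_set R k n.
  by move=> Q; apply: mem_set; exact: Phi0_skel.
pose F (Q : SPbar R k n) : torus_skeleton R k n := exist _ (Phi2 Q) (skel Q).
pose G (y : torus_skeleton R k n) : SPbar R k n := piu (can c0 (sval y)).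
have FG : cancel G F.
  move=> y; apply: eq_sig_hprop => [? ? ?|]; first exact: Prop_irrelevance.
  rewrite /= /G /piu Phi2_pt Phi1_pt; apply: Phi0_can; exact: set_mem (svalP y).
have GF : cancel F G.
  move=> Q; rewrite [in RHS](piu_surj Q); set u := repr _.
  rewrite /G /F /=.
  have -> : Phi2 Q = Phi0 u by rewrite [in LHS](piu_surj Q) /piu Phi2_pt Phi1_pt.
  apply: (inj_Phi0 c0); apply: Phi0_can; exact: Phi0_skel.
have Fc : continuous F by apply: settype_cont_into; exact: Phi2_cont.
exists F, G; split => //; split; last by split.
apply/continuous_closedP => C hC.
have -> : G @^-1` C = F @` C.
  apply/seteqP; split => y.
  - by move=> hy; exists (G y) => //; exact: FG.
  - by case=> Q hQ <-; rewrite /= GF.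
apply: compact_closed; first exact: Sk_hausdorff.
apply: continuous_compact; first exact: continuous_subspaceT.
apply: (subclosed_compact hC (@SPbar_compact R k n)); by [].
Qed.
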